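(* Let $K\subset\mathbb{R}^n$ be a $0$-symmetric convex body, and let $a_1,\dots,a_n\in\mathbb{Z}^n$ be linearly independent with $a_j\in\lambda_j(K)K$ for $1\le j\le n$. Let $i\in\{1,\dots,n-1\}$, let $\overline{L}$ be an $i$-dimensional linear subspace of $\mathbb{R}^n$ containing $i$ linearly independent points of $\mathbb{Z}^n$, and let $j_1,\dots,j_{n-i}$ be distinct indices in $\{1,\dots,n\}$ with $\mathrm{lin}\{a_{j_1},\dots,a_{j_{n-i}}\}\cap\overline{L}=\{0\}$. Then $$\prod_{j=1}^i\lambda_j(K\cap\overline{L},\mathbb{Z}^n\cap\overline{L})\geq\prod_{k\in\{1,\dots,n\}\setminus\{j_1,\dots,j_{n-i}\}}\lambda_k(K).$$
   Context: A $0$-symmetric convex body is a compact convex set $K=-K$ with nonempty interior. $\lambda_j(K)=\min\{\lambda>0:\dim(\lambda K\cap\mathbb{Z}^n)\ge j\}$ ($\dim$ = dimension of affine hull). Analogously, for the $i$-dimensional body $K\cap\overline{L}$ in the space $\overline{L}$ with lattice $\mathbb{Z}^n\cap\overline{L}$, $\lambda_j(K\cap\overline{L},\mathbb{Z}^n\cap\overline{L})=\min\{\lambda>0:\dim(\lambda (K\cap\overline{L})\cap\mathbb{Z}^n)\ge j\}$, $1\le j\le i$. *)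

(* Defs.v *)
From HB Require Import structures.
From mathcomp Require Import all_boot all_order all_algebra.
From mathcomp Require Import all_classical all_reals all_analysis.
Set Implicit Arguments. Unset Strict Implicit. Unset Printing Implicit Defensive.
Import Order.TTheory GRing.Theory Num.Theory.
Import numFieldNormedType.Exports.
Local Open Scope classical_set_scope.
Local Open Scope ring_scope.

Definition lattice_pt (R : realType) (n : nat) (v : 'rV[R]_n) : Prop :=
  forall k : 'I_n, v 0 k \is a Num.int.

Definition convex_set (R : realType) (n : nat) (K : set 'rV[R]_n) : Prop :=
  forall x y (t : R), K x -> K y -> 0 <= t -> t <= 1 -> K (t *: x + (1 - t) *: y).

Definition sym_convex_body (R : realType) (n : nat) (K : set 'rV[R]_n) : Prop :=
  [/\ compact K, convex_set K, [set - x | x in K] = K & interior K !=set0].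

Definition dilate (R : realType) (n : nat) (l : R) (K : set 'rV[R]_n) : set 'rV[R]_n :=
  [set l *: x | x in K].

(* dim (affine hull S) >= j, i.e. S contains j+1 affinely independent points *)
Definition affdim_ge (R : realType) (n : nat) (S : set 'rV[R]_n) (j : nat) : Prop :=
  exists (x0 : 'rV[R]_n) (xs : 'I_j -> 'rV[R]_n),
    [/\ S x0, (forall k, S (xs k)) & row_free (\matrix_(k < j) (xs k - x0))].

(* j-th successive minimum of S w.r.t. Z^n (as the infimum, which is a minimum
   for convex bodies):  min{ l > 0 : dim(l S ∩ Z^n) >= j } *)
Definition succ_min (R : realType) (n : nat) (S : set 'rV[R]_n) (j : nat) : R :=
  inf [set l : R | 0 < l /\ affdim_ge (dilate l S `&` [set v | lattice_pt v]) j].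

(* Main.v *)
Require Import Defs.
From HB Require Import structures.
From mathcomp Require Import all_boot all_order all_algebra.
From mathcomp Require Import all_classical all_reals all_analysis.
From mathcomp Require Import ring lra zify.
Import Order.TTheory GRing.Theory Num.Theory.
Import numFieldNormedType.Exports.
Set Implicit Arguments. Unset Strict Implicit. Unset Printing Implicit Defensive.
Local Open Scope classical_set_scope.
Local Open Scope ring_scope.

Lemma succ_min_ge0 (R : realType) (n : nat) (S : set 'rV[R]_n) j :
  0 <= succ_min S j.
Proof.
rewrite /succ_min.
set E := [set l | _].
have [[x Ex]|ne] := pselect (E !=set0).
  by apply: lb_le_inf; [exists x | move=> y [/ltW]].
have -> : E = set0.
  by rewrite predeqE => x; split => // Ex; apply: ne; exists x.
by rewrite inf0.
Qed.

Lemma succ_min_le (R : realType) (n : nat) (S : set 'rV[R]_n) j l :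
  0 < l -> affdim_ge (dilate l S `&` [set v | lattice_pt v]) j ->
  succ_min S j <= l.
Proof.
move=> l0 H; rewrite /succ_min; apply: ge_inf; last by split.
by exists 0 => y [/ltW].
Qed.

Lemma scatter (F : fieldType) (m p q : nat) (e : 'I_m -> 'I_p)
  (v : 'rV[F]_m) (B : 'M[F]_(p, q)) (C : 'M[F]_(m, q)) :
  injective e -> (forall j, row j C = row (e j) B) ->
  exists w : 'rV_p, (forall j, w 0 (e j) = v 0 j) /\ w *m B = v *m C.
Proof.
move=> einj hC.
exists (\row_k \sum_(j | e j == k) v 0 j); split.
  move=> j; rewrite mxE (big_pred1 j) // => j'.
  by rewrite inj_eq.
rewrite !mulmx_sum_row.
under eq_bigr do rewrite mxE scaler_suml.
rewrite (exchange_big_dep predT) //=.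
apply: eq_bigr => j _.
by rewrite (big_pred1 (e j)) ?hC // => k; rewrite eq_sym.
Qed.

Lemma affdim_mono (R : realType) (n : nat) (S : set 'rV[R]_n) N s :
  affdim_ge S N -> (s <= N)%N -> affdim_ge S s.
Proof.
move=> [x0 [xs [S0 Sxs rf]]] hs.
exists x0, (fun k => xs (widen_ord hs k)); split => //.
apply: inj_row_free => v hv.
have winj : injective (widen_ord hs).
  by move=> a b h; apply/val_inj; exact: (congr1 val h).
have hC : forall j, row j (\matrix_(k < s) (xs (widen_ord hs k) - x0)) =
    row (widen_ord hs j) (\matrix_(k < N) (xs k - x0)) by move=> j; rewrite !rowK.
have [w [hw1 hw2]] := scatter v winj hC.
have w0 : w = 0 by apply: (row_free_inj rf); rewrite hw2 hv mul0mx.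
by apply/rowP => j; rewrite -hw1 w0 !mxE.
Qed.
Lemma sym_zero (R : realType) (n : nat) (K : set 'rV[R]_n) :
  sym_convex_body K -> K 0 /\ forall x, K x -> K (- x).
Proof.
move=> [_ Kc Ks [x /interior_subset Kx]].
have Kn : forall y, K y -> K (- y) by move=> y Ky; rewrite -Ks; exists y.
split => //.
have := Kc x (- x) (1/2) Kx (Kn _ Kx).
have -> : (1/2 : R) *: x + (1 - 1/2) *: - x = 0.
  by rewrite scalerN -scaleNr -scalerDl; apply/eqP; rewrite scaler_eq0; apply/orP; left; apply/eqP; lra.
by apply; lra.
Qed.

Lemma dilate_mono (R : realType) (n : nat) (K : set 'rV[R]_n) t t' x :
  Defs.convex_set K -> K 0 -> dilate t K x -> 0 <= t -> t <= t' -> 0 < t' ->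
  dilate t' K x.
Proof.
move=> Kc K0 [y Ky <-] t0 tt' t'0.
exists ((t / t') *: y + (1 - t / t') *: 0).
  apply: (Kc y 0 (t / t')) => //; first exact: divr_ge0 (ltW t'0).
  by rewrite ler_pdivrMr // mul1r.
by rewrite scaler0 addr0 scalerA mulrCA mulfV ?mulr1 // gt_eqF.
Qed.

Lemma dilate_add (R : realType) (n : nat) (K : set 'rV[R]_n) s t x y :
  Defs.convex_set K -> K 0 -> dilate s K x -> dilate t K y -> 0 <= s -> 0 <= t ->
  dilate (s + t) K (x + y).
Proof.
move=> Kc K0 [x' Kx <-] [y' Ky <-] s0 t0.
have [st0|st0] := eqVneq (s + t) 0.
  have s00 : s = 0 by lra.
  have t00 : t = 0 by lra.
  by exists 0 => //; rewrite s00 t00 !scale0r scaler0 addr0.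
have stp : 0 < s + t by rewrite lt_def st0 /=; lra.
exists ((s / (s + t)) *: x' + (1 - s / (s + t)) *: y').
  apply: (Kc x' y' (s / (s + t))) => //.
    by apply: divr_ge0 => //; lra.
  by rewrite ler_pdivrMr // mul1r; lra.
rewrite scalerDr !scalerA mulrCA mulfV ?gt_eqF // mulr1; congr (_ + _); congr (_ *: _).
by field; rewrite st0.
Qed.

Lemma dilate_scale (R : realType) (n : nat) (K : set 'rV[R]_n) t c x :
  (forall z, K z -> K (- z)) -> dilate t K x -> dilate (`|c| * t) K (c *: x).
Proof.
move=> Kn [y Ky <-].
have [c0|c0] := leP 0 c.
  by exists y => //; rewrite scalerA ger0_norm.
exists (- y); first exact: Kn.
by rewrite scalerN scalerA ltr0_norm // mulNr scaleNr opprK.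
Qed.

Lemma dilate_sum (R : realType) (n : nat) (K : set 'rV[R]_n) (I : Type)
  (r : seq I) (w : I -> R) (F : I -> 'rV[R]_n) :
  Defs.convex_set K -> K 0 -> (forall j, 0 <= w j /\ dilate (w j) K (F j)) ->
  dilate (\sum_(j <- r) w j) K (\sum_(j <- r) F j).
Proof.
move=> Kc K0 H; elim: r => [|a r IH].
  by rewrite !big_nil; exists 0 => //; rewrite scaler0.
rewrite !big_cons; have [wa Fa] := H a.
apply: dilate_add => //; apply: sumr_ge0 => j _; exact: (H j).1.
Qed.
Lemma seq_max (R : realType) (s : seq R) :
  s != [::] -> exists2 x, x \in s & forall y, y \in s -> y <= x.
Proof.
elim: s => // a s IH _.
have [->|sn] := eqVneq s [::].
  by exists a; rewrite ?mem_seq1 // => y; rewrite mem_seq1 => /eqP ->.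
have [x xs xmax] := IH sn.
have [ax|xa] := leP a x.
  exists x; first by rewrite in_cons xs orbT.
  by move=> y; rewrite in_cons => /orP [/eqP ->|/xmax].
exists a; first by rewrite in_cons eqxx.
move=> y; rewrite in_cons => /orP [/eqP ->//|/xmax yx].
exact: le_trans yx (ltW xa).
Qed.

Lemma prod_count (R : realType) (s : seq R) (mu : nat -> R) :
  (forall x, x \in s -> 0 <= x) ->
  (forall m, (m < size s)%N -> (m.+1 <= count (fun x : R => (x <= mu m)%R) s)%N) ->
  \prod_(x <- s) x <= \prod_(m < size s) mu m.
Proof.
move Hk : (size s) => k; elim: k s Hk => [|k IH] s Hk s0 Hc.
  by move/size0nil: Hk => ->; rewrite big_nil big_ord0.
have sn : s != [::] by apply/eqP => s0'; rewrite s0' in Hk.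
have [x xs xmax] := seq_max sn.
have xmu : x <= mu k.
  have := Hc k; rewrite ltnSn => /(_ isT) hc.
  have : all (fun x => x <= mu k) s.
    by rewrite all_count eqn_leq count_size Hk hc.
  by move/allP/(_ x xs).
rewrite (perm_big _ (perm_to_rem xs)) big_cons big_ord_recr /= mulrC.
apply: ler_pM.
- by rewrite big_seq; apply: prodr_ge0 => y /mem_rem /s0.
- exact: s0.
- apply: IH.
  + by rewrite size_rem // Hk.
  + by move=> y /mem_rem /s0.
  + move=> m mk.
    have mk' : (m < k.+1)%N by rewrite ltnS ltnW.
    have := Hc m mk'.
    rewrite ((permP (perm_to_rem xs)) (fun y => y <= mu m)) /=.
    have [xm|xm] := boolP (x <= mu m).
      move=> _; rewrite -size_filter.
      have -> : [seq y <- rem x s | y <= mu m] = rem x s.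
        apply/all_filterP/allP => y /mem_rem ys; exact: le_trans (xmax y ys) xm.
      by rewrite size_rem // Hk.
    by rewrite add0n.
- exact: xmu.
Qed.

Lemma eps_gap (R : realType) (s : seq R) (mu : R) :
  exists2 e, 0 < e & forall x, x \in s -> mu < x -> mu + e <= x.
Proof.
elim: s => [|a s [e e0 He]]; first by exists 1.
have [am|ma] := leP a mu.
  exists e => // x; rewrite in_cons => /orP [/eqP -> ?|/He //]; lra.
exists (Num.min e (a - mu)).
  by rewrite lt_min e0 /=; lra.
move=> x; rewrite in_cons => /orP [/eqP -> _|xs mx].
  by rewrite -lerBrDl ge_min lexx orbT.
by rewrite -lerBrDl ge_min lerBrDl He.
Qed.

Theorem lemma2p3 (R : realType) (n : nat) (K : set 'rV[R]_n)
  (A : 'M[R]_n) (i : nat) (L : {vspace 'rV[R]_n}) (J : 'I_(n - i) -> 'I_n) :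
  sym_convex_body K ->
  (forall j : 'I_n, lattice_pt (row j A)) ->
  row_free A ->
  (forall j : 'I_n, dilate (succ_min K j.+1) K (row j A)) ->
  (1 <= i)%N -> (i <= n - 1)%N ->
  \dim L = i ->
  (exists b : 'I_i -> 'rV[R]_n,
      [/\ forall k, lattice_pt (b k), forall k, b k \in L
        & row_free (\matrix_(k < i) b k)]) ->
  injective J ->
  (<<[seq row (J k) A | k : 'I_(n - i)]>> :&: L = 0)%VS ->
  \prod_(k < n | k \notin codom J) succ_min K k.+1
    <= \prod_(j < i) succ_min (K `&` [set v | v \in L]) j.+1.
Proof.
move=> Kb Alat Afree Adil i1 iN dimL [b [blat bL bfree]] Jinj Hcap.
have [K0 Kn] := sym_zero Kb.
have Kc : Defs.convex_set K by case: Kb.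
set lam := fun k : 'I_n => succ_min K k.+1.
set mu := fun m : nat => succ_min (K `&` [set v | v \in L]) m.+1.
have lam0 : forall k, 0 <= lam k by move=> k; exact: succ_min_ge0.
have absorb : forall v : 'rV[R]_n, exists2 t, 0 < t & dilate t K v.
  move=> v.
  have Au : A \in unitmx by rewrite -row_free_unit.
  have vE : v = \sum_j (v *m invmx A) 0 j *: row j A.
    by rewrite -mulmx_sum_row mulmxKV.
  have H : dilate (\sum_j `|(v *m invmx A) 0 j| * lam j) K v.
    rewrite {2}vE; apply: dilate_sum => // j; split.
      by apply: mulr_ge0.
    exact: dilate_scale (Adil j).
  have H0 : 0 <= \sum_j `|(v *m invmx A) 0 j| * lam j.
    by apply: sumr_ge0 => j _; apply: mulr_ge0.
  exists (\sum_j `|(v *m invmx A) 0 j| * lam j + 1); first by lra.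
  by apply: (dilate_mono Kc K0 H) => //; lra.
have SLne : forall m, (m < i)%N ->
  [set l | 0 < l /\ affdim_ge (dilate l (K `&` [set v | v \in L])
                                `&` [set v | lattice_pt v]) m.+1] !=set0.
  move=> m mi.
  have ht : forall k : 'I_i, exists t, 0 < t /\ dilate t K (b k).
    by move=> k; have [t t0 ht] := absorb (b k); exists t.
  have [t ht'] := boolp.choice ht.
  pose l := 1 + \sum_k t k.
  have s0 : 0 <= \sum_k t k by apply: sumr_ge0 => k _; exact: ltW (ht' k).1.
  have l0 : 0 < l by rewrite /l; lra.
  have tl : forall k, t k <= l.
    move=> k; rewrite /l (bigD1 k) //=.
    have : 0 <= \sum_(j | j != k) t j.
      by apply: sumr_ge0 => j _; exact: ltW (ht' j).1.
    have := (ht' k).1; lra.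
  exists l; split => //.
  apply: (affdim_mono (N := i)) => //.
  exists 0, b; split.
  - split; last by move=> k; rewrite mxE; exact: int_num0.
    exists 0; last by rewrite scaler0.
    by split => //=; exact: mem0v.
  - move=> k; split; last exact: blat.
    have [y Ky yE] := dilate_mono Kc K0 (ht' k).2 (ltW (ht' k).1) (tl k) l0.
    exists y => //; split => //=.
    have -> : y = l^-1 *: b k by rewrite -yE scalerA mulVf ?scale1r // gt_eqF.
    exact: memvZ.
  - have -> : \matrix_(k < i) (b k - 0) = \matrix_(k < i) b k.
      by apply/row_matrixP => k; rewrite !rowK subr0.
    exact: bfree.
have claim : forall m, (m < i)%N ->
  (m.+1 <= #|[pred k : 'I_n | (k \notin codom J) && (lam k <= mu m)%R]|)%N.
  move=> m mi; rewrite leqNgt; apply/negP; rewrite ltnS => Hlt.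
  have [e e0 He] := eps_gap [seq lam k | k <- enum 'I_n] (mu m).
  set S := [set l | 0 < l /\ affdim_ge (dilate l (K `&` [set v | v \in L])
                                `&` [set v | lattice_pt v]) m.+1].
  have muS : mu m = inf S by [].
  have hlb : has_lbound S by exists 0 => y [/ltW].
  have [l Sl lmu] := inf_adherent e0 (conj (SLne m mi) hlb).
  have mul : mu m <= l by rewrite muS; exact: ge_inf hlb l Sl.
  rewrite -muS in lmu.
  move: Sl => [l0 [x0 [xs [[Dx0 Lx0] Sxs rf]]]].
  have Tl : forall k, lam k <= l -> lam k <= mu m.
    move=> k hk; rewrite leNgt; apply/negP => hlt.
    have := He (lam k) (map_f _ (mem_enum _ k)) hlt; lra.
  set P := [pred k : 'I_n | (k \in codom J) && (lam k <= l)].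
  set p := #|P|.
  pose ev := (@enum_val _ P : 'I_p -> 'I_n).
  set D1 := \matrix_(k < m.+1) (xs k - x0).
  set D2 := \matrix_(j < p) (row (ev j) A - x0).
  have inL : forall x, dilate l (K `&` [set v | v \in L]) x -> x \in L.
    by move=> x [y [_ yL] <-]; exact: memvZ.
  have x0L : x0 \in L by exact: inL.
  have xsL : forall k, xs k \in L by move=> k; exact: inL (Sxs k).1.
  have rfD : row_free (col_mx D1 D2).
    apply: inj_row_free => v hv.
    rewrite -(hsubmxK v) mul_row_col in hv.
    set v1 := lsubmx v in hv; set v2 := rsubmx v in hv.
    set y := v2 *m (\matrix_j row (ev j) A).
    have eq2 : v2 *m D2 = y - (\sum_j v2 0 j) *: x0.
      rewrite /y !mulmx_sum_row scaler_suml -sumrB.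
      by apply: eq_bigr => j _; rewrite !rowK scalerBr.
    have yE : y = (\sum_j v2 0 j) *: x0 - v1 *m D1.
      apply/eqP; rewrite -subr_eq0 -hv eq2.
      by rewrite opprB addrCA.
    have yL : y \in L.
      rewrite yE; apply: memvB; first exact: memvZ.
      rewrite mulmx_sum_row; apply: memv_suml => k _; apply: memvZ.
      by rewrite rowK; apply: memvB.
    have yU : y \in <<[seq row (J k) A | k : 'I_(n - i)]>>%VS.
      rewrite /y mulmx_sum_row; apply: memv_suml => j _; apply: memvZ.
      rewrite rowK /ev; have := enum_valP j; rewrite inE => /andP [/codomP [k ->] _].
      by apply: memv_span; apply/mapP; exists k; rewrite ?mem_enum.
    have y0 : y = 0 by apply/eqP; rewrite -memv0 -Hcap memv_cap yU yL.
    have hC : forall j, row j (\matrix_j row (ev j) A) = row (ev j) A.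
      by move=> j; rewrite rowK.
    have [w [hw1 hw2]] := scatter v2 (@enum_val_inj _ P) hC.
    have w0 : w = 0 by apply: (row_free_inj Afree); rewrite hw2 -/y y0 mul0mx.
    have v20 : v2 = 0 by apply/rowP => j; rewrite -hw1 w0 !mxE.
    rewrite v20 mul0mx addr0 in hv.
    have v10 : v1 = 0 by apply: (row_free_inj rf); rewrite hv mul0mx.
    by rewrite -(hsubmxK v) -/v1 -/v2 v10 v20 row_mx0.
  have Nn : (m.+1 + p <= n)%N.
    by move: rfD; rewrite /row_free => /eqP <-; exact: rank_leq_col.
  have affN : affdim_ge (dilate l K `&` [set v | lattice_pt v]) (m.+1 + p).
    exists x0, (fun k => row k (col_mx D1 D2) + x0); split.
    - split => //; have [y [Ky _] <-] := Dx0; by exists y.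
    - move=> k; case: (splitP k) => [k' hk | k' hk].
        have -> : k = lshift p k' by apply/val_inj.
        rewrite rowKu rowK subrK.
      2: have -> : k = rshift m.+1 k' by apply/val_inj.
      2: rewrite rowKd rowK subrK.
      + have [[y [Ky _] <-] lat] := Sxs k'; split => //; by exists y.
      + have := enum_valP k'; rewrite inE => /andP [_ hl].
        split; last exact: Alat.
        exact: (dilate_mono Kc K0 (Adil _) (lam0 _) hl l0).
    - have -> : \matrix_k (row k (col_mx D1 D2) + x0 - x0) = col_mx D1 D2.
        by apply/row_matrixP => k; rewrite rowK addrK.
      exact: rfD.
  have allT : forall k : 'I_n, (k < m.+1 + p)%N -> lam k <= l.
    by move=> k hk; apply: succ_min_le l0 _; exact: affdim_mono affN hk.
  have winj : injective (widen_ord Nn).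
    by move=> a c h; apply/val_inj; exact: (congr1 val h).
  have c1 : (m.+1 + p <= #|[pred k : 'I_n | (lam k <= l)%R]|)%N.
    have := card_imset predT winj.
    rewrite card_ord => <-.
    apply: subset_leq_card; apply/fintype.subsetP => k /imsetP [x _ ->].
    by rewrite inE; apply: allT; rewrite /= ltn_ord.
  have c2 : #|[pred k : 'I_n | (lam k <= l)%R]| =
            (p + #|[predD [pred k : 'I_n | (lam k <= l)%R] & codom J]|)%N.
    rewrite -(cardID [pred k | k \in codom J]); congr (_ + _)%N.
    by apply: eq_card => k; rewrite !inE andbC.
  have c3 : (#|[predD [pred k : 'I_n | (lam k <= l)%R] & codom J]| <= m)%N.
    apply: leq_trans Hlt; apply: subset_leq_card; apply/fintype.subsetP => k.
    by rewrite !inE => /andP [nJ hl]; rewrite nJ /= Tl.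
  lia.
pose C := [pred k : 'I_n | k \notin codom J].
pose s := [seq lam k | k <- enum C].
have LHS : \prod_(k < n | k \notin codom J) succ_min K k.+1 = \prod_(x <- s) x.
  by rewrite big_map big_enum.
have Hs : size s = i.
  rewrite size_map -cardE.
  have h1 := card_codom Jinj; rewrite card_ord in h1.
  have h2 := cardC [pred k | k \in codom J]; rewrite card_ord in h2.
  have -> : #|C| = #|[predC [pred k | k \in codom J]]|.
    by apply: eq_card => k; rewrite !inE.
  have e3 : #|[pred k | k \in codom J]| = #|codom J| by apply: eq_card.
  rewrite e3 in h2.
  move: h2; rewrite h1 => h2; apply/eqP; rewrite -(eqn_add2l (n - i)) h2; apply/eqP; lia.
rewrite LHS.
have := prod_count (s := s) (mu := mu).
rewrite Hs; apply.
  by move=> x /mapP [k _ ->]; exact: lam0.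
move=> m mi; rewrite count_map.
apply: (leq_trans (claim m mi)); rewrite cardE /enum_mem count_filter size_filter.
by rewrite leq_eqVlt; apply/orP; left; apply/eqP; apply: eq_count => k; rewrite !inE andbC.
Qed.
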